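(* Let $A$ be a unital separable $C^*$-algebra and let $\alpha\in{\rm Aut}(A)$ be approximately inner. Suppose $\{p_j\}_{j\ge1}$ is a central sequence of projections in $A$. Then there exists a central sequence of partial isometries $\{w_j\}_{j\ge1}$ in $A$ such that $w_j^*w_j=p_j$ and $w_jw_j^*=\alpha(p_j)$ for all $j$.
   Context: An automorphism $\alpha$ of a unital $C^*$-algebra $A$ is approximately inner if there is a sequence of unitaries $u_n\in A$ with $\|u_n^*au_n-\alpha(a)\|\to0$ for all $a\in A$. A sequence $\{x_j\}$ in $A$ is central if $\|x_ja-ax_j\|\to0$ as $j\to\infty$ for every $a\in A$. *)

(* Defs.v *)
From HB Require Import structures.
From mathcomp Require Import all_boot all_order all_algebra.
From mathcomp Require Import reals.
From mathcomp Require Import complex.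
Set Implicit Arguments. Unset Strict Implicit. Unset Printing Implicit Defensive.
Import Order.TTheory GRing.Theory Num.Theory.
Local Open Scope ring_scope.

Record cstar_alg (R : realType) := CStarAlg {
  ca_T :> Type;
  ca_zero : ca_T;
  ca_one : ca_T;
  ca_add : ca_T -> ca_T -> ca_T;
  ca_opp : ca_T -> ca_T;
  ca_scale : R[i] -> ca_T -> ca_T;
  ca_mul : ca_T -> ca_T -> ca_T;
  ca_star : ca_T -> ca_T;
  ca_norm : ca_T -> R;
  ca_addA : forall x y z, ca_add x (ca_add y z) = ca_add (ca_add x y) z;
  ca_addC : forall x y, ca_add x y = ca_add y x;
  ca_add0 : forall x, ca_add ca_zero x = x;
  ca_addN : forall x, ca_add (ca_opp x) x = ca_zero;
  ca_scale1 : forall x, ca_scale 1 x = x;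
  ca_scaleA : forall a b x, ca_scale a (ca_scale b x) = ca_scale (a * b) x;
  ca_scaleDr : forall a x y, ca_scale a (ca_add x y) = ca_add (ca_scale a x) (ca_scale a y);
  ca_scaleDl : forall a b x, ca_scale (a + b) x = ca_add (ca_scale a x) (ca_scale b x);
  ca_mulA : forall x y z, ca_mul x (ca_mul y z) = ca_mul (ca_mul x y) z;
  ca_mul1l : forall x, ca_mul ca_one x = x;
  ca_mul1r : forall x, ca_mul x ca_one = x;
  ca_mulDl : forall x y z, ca_mul (ca_add x y) z = ca_add (ca_mul x z) (ca_mul y z);
  ca_mulDr : forall x y z, ca_mul x (ca_add y z) = ca_add (ca_mul x y) (ca_mul x z);
  ca_scale_mull : forall a x y, ca_mul (ca_scale a x) y = ca_scale a (ca_mul x y);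
  ca_scale_mulr : forall a x y, ca_mul x (ca_scale a y) = ca_scale a (ca_mul x y);
  ca_starK : forall x, ca_star (ca_star x) = x;
  ca_starD : forall x y, ca_star (ca_add x y) = ca_add (ca_star x) (ca_star y);
  ca_starZ : forall a x, ca_star (ca_scale a x) = ca_scale (conjc a) (ca_star x);
  ca_starM : forall x y, ca_star (ca_mul x y) = ca_mul (ca_star y) (ca_star x);
  ca_norm_ge0 : forall x, 0 <= ca_norm x;
  ca_norm_eq0 : forall x, ca_norm x = 0 -> x = ca_zero;
  ca_normD : forall x y, ca_norm (ca_add x y) <= ca_norm x + ca_norm y;
  ca_normZ : forall a x, ca_norm (ca_scale a x) = Normc.normc a * ca_norm x;
  ca_normM : forall x y, ca_norm (ca_mul x y) <= ca_norm x * ca_norm y;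
  ca_cstar : forall x, ca_norm (ca_mul (ca_star x) x) = ca_norm x ^+ 2;
  ca_complete : forall u : nat -> ca_T,
    (forall e : R, 0 < e -> exists N, forall m n, (N <= m)%N -> (N <= n)%N ->
        ca_norm (ca_add (u m) (ca_opp (u n))) < e) ->
    exists l, forall e : R, 0 < e -> exists N, forall n, (N <= n)%N ->
        ca_norm (ca_add (u n) (ca_opp l)) < e
}.

Arguments ca_zero {R} _.
Arguments ca_one {R} _.

Section Defs.
Context {R : realType} (A : cstar_alg R).

Local Notation "x + y" := (ca_add x y).
Local Notation "- x" := (ca_opp x).
Local Notation "x * y" := (ca_mul x y).
Local Notation "x ^*" := (ca_star x).

Definition ca_dist (x y : A) : R := ca_norm (x + - y).

Definition separable : Prop :=
  exists d : nat -> A, forall (x : A) (e : R), 0 < e -> exists n, ca_dist x (d n) < e.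

Definition is_projection (p : A) : Prop := p^* = p /\ p * p = p.

Definition is_partial_isometry (w : A) : Prop := is_projection (w^* * w).

Definition is_unitary (u : A) : Prop := u^* * u = ca_one A /\ u * u^* = ca_one A.

Definition is_automorphism (f : A -> A) : Prop :=
  (forall x y, f (x + y) = f x + f y) /\
  (forall a x, f (ca_scale a x) = ca_scale a (f x)) /\
  (forall x y, f (x * y) = f x * f y) /\
  f (ca_one A) = ca_one A /\
  (forall x, f (x^*) = (f x)^*) /\
  bijective f.

Definition approximately_inner (f : A -> A) : Prop :=
  exists u : nat -> A, (forall n, is_unitary (u n)) /\
    forall (a : A) (e : R), 0 < e -> exists N, forall n, (N <= n)%N ->
      ca_dist ((u n)^* * a * u n) (f a) < e.

Definition central_seq (x : nat -> A) : Prop :=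
  forall (a : A) (e : R), 0 < e -> exists N, forall j, (N <= j)%N ->
    ca_dist (x j * a) (a * x j) < e.

End Defs.

(* Main.v *)
Set Warnings "-all".
From HB Require Import structures.
Require Import Defs.
From mathcomp Require Import all_boot all_order all_algebra reals complex.
From mathcomp Require Import boolp.
Set Implicit Arguments. Unset Strict Implicit. Unset Printing Implicit Defensive.
Import Order.TTheory GRing.Theory Num.Theory.
Local Open Scope ring_scope.

Definition CT {R : realType} (A : cstar_alg R) : Type := ca_T A.
HB.instance Definition _ (R : realType) (A : cstar_alg R) := gen_eqMixin (CT A).
HB.instance Definition _ (R : realType) (A : cstar_alg R) := gen_choiceMixin (CT A).
HB.instance Definition _ (R : realType) (A : cstar_alg R) :=
  GRing.isZmodule.Build (CT A) (@ca_addA R A) (@ca_addC R A) (@ca_add0 R A) (@ca_addN R A).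
HB.instance Definition _ (R : realType) (A : cstar_alg R) :=
  GRing.Zmodule_isPzRing.Build (CT A) (@ca_mulA R A) (@ca_mul1l R A) (@ca_mul1r R A) (@ca_mulDl R A) (@ca_mulDr R A).

Definition rsc {R : realType} (A : cstar_alg R) (c : R) (x : CT A) : CT A := ca_scale (c%:C)%C x.

Lemma rscA (R : realType) (A : cstar_alg R) a b (v : CT A) : rsc a (rsc b v) = rsc (a * b) v.
Proof. by rewrite /rsc ca_scaleA rmorphM. Qed.
Lemma rsc1 (R : realType) (A : cstar_alg R) : left_id 1 (@rsc R A).
Proof. by move=> v; rewrite /rsc ca_scale1. Qed.
Lemma rscDr (R : realType) (A : cstar_alg R) : right_distributive (@rsc R A) +%R.
Proof. by move=> a u v; rewrite /rsc ca_scaleDr. Qed.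
Lemma rscDl (R : realType) (A : cstar_alg R) (v : CT A) : {morph (@rsc R A)^~ v: a b / a + b}.
Proof. by move=> a b; rewrite /rsc rmorphD ca_scaleDl. Qed.
HB.instance Definition _ (R : realType) (A : cstar_alg R) :=
  GRing.Zmodule_isLmodule.Build R (CT A) (@rscA R A) (@rsc1 R A) (@rscDr R A) (@rscDl R A).
From mathcomp Require Import ring lra.
Set Warnings "-all".

Definition st {R : realType} {A : cstar_alg R} (x : CT A) : CT A := ca_star x.

Section Basic.
Variables (R : realType) (A : cstar_alg R).
Local Notation T := (CT A).
Local Notation nm := (@ca_norm R A).
Implicit Types x y z : T.

Lemma rsc_mull (c : R) x y : (c *: x) * y = c *: (x * y).
Proof. exact: ca_scale_mull. Qed.
Lemma rsc_mulr (c : R) x y : x * (c *: y) = c *: (x * y).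
Proof. exact: ca_scale_mulr. Qed.

Lemma stK x : st (st x) = x. Proof. exact: ca_starK. Qed.
Lemma stD x y : st (x + y) = st x + st y. Proof. exact: ca_starD. Qed.
Lemma stM x y : st (x * y) = st y * st x. Proof. exact: ca_starM. Qed.
Lemma st0 : st (0 : T) = 0.
Proof. by apply: (@addrI _ (st (0:T))); rewrite -stD !addr0. Qed.
Lemma stN x : st (- x) = - st x.
Proof. by apply: (@addrI _ (st x)); rewrite -stD !subrr st0. Qed.
Lemma stB x y : st (x - y) = st x - st y.
Proof. by rewrite stD stN. Qed.
Lemma st1 : st (1 : T) = 1.
Proof.
have := stM (st 1) 1; rewrite stK mulr1 => <-.
by rewrite -[RHS](stK 1); congr st; rewrite -[LHS]mulr1.
Qed.
Lemma stZ (c : R) x : st (c *: x) = c *: st x.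
Proof. by rewrite /st /GRing.scale /= /rsc ca_starZ conjc_real. Qed.
Lemma st_sum (I : Type) (r : seq I) (P : pred I) (F : I -> T) :
  st (\sum_(i <- r | P i) F i) = \sum_(i <- r | P i) st (F i).
Proof.
elim: r => [|a r IH]; first by rewrite !big_nil st0.
by rewrite !big_cons; case: (P a); rewrite ?stD IH.
Qed.
Lemma stX x n : st (x ^+ n) = (st x) ^+ n.
Proof.
elim: n => [|n IH]; first by rewrite !expr0 st1.
by rewrite exprS stM IH exprSr.
Qed.

Lemma nm_ge0 x : 0 <= nm x. Proof. exact: ca_norm_ge0. Qed.
Lemma nmD x y : nm (x + y) <= nm x + nm y. Proof. exact: ca_normD. Qed.
Lemma nmM x y : nm (x * y) <= nm x * nm y. Proof. exact: ca_normM. Qed.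
Lemma nm_eq0 x : nm x = 0 -> x = 0. Proof. exact: ca_norm_eq0. Qed.
Lemma nmZ (c : R) x : nm (c *: x) = `|c| * nm x.
Proof.
rewrite /GRing.scale /= /rsc ca_normZ; congr (_ * _).
by rewrite /Normc.normc /= expr0n /= addr0 sqrtr_sqr.
Qed.
Lemma nm0 : nm (0 : T) = 0.
Proof. by rewrite -(scale0r (0 : T)) nmZ normr0 mul0r. Qed.
Lemma nmN x : nm (- x) = nm x.
Proof. by rewrite -scaleN1r nmZ normrN normr1 mul1r. Qed.
Lemma nmBC x y : nm (x - y) = nm (y - x).
Proof. by rewrite -nmN opprB. Qed.
Lemma nm_st x : nm (st x) = nm x.
Proof.
suff H : forall y, nm y <= nm (st y).
  by apply/eqP; rewrite eq_le H -{2}(stK x) H.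
move=> y; have := ca_cstar y; rewrite -/(nm _) => E.
have := nmM (st y) y; rewrite E expr2 => H.
have [->|yp] := eqVneq (nm y) 0; first exact: nm_ge0.
have ygt : 0 < nm y by rewrite lt0r yp nm_ge0.
by rewrite -(ler_pM2r ygt).
Qed.
Lemma cstar x : nm (st x * x) = nm x ^+ 2. Proof. exact: ca_cstar. Qed.

Lemma nm1 : nm (1 : T) <= 1.
Proof.
have := cstar 1; rewrite st1 mulr1 expr2 => E.
have [->|n0] := eqVneq (nm (1:T)) 0; first by [].
have : nm (1 : T) * 1 = nm (1:T) * nm (1:T) by rewrite mulr1 -E.
by move/(mulfI n0) => <-.
Qed.

Lemma nm_le1_sq x : nm (st x * x) <= 1 -> nm x <= 1.
Proof.
rewrite cstar => H; have := nm_ge0 x => H0.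
by rewrite -(expr_le1 (isT : (0 < 2)%N) H0).
Qed.

Definition unitary (u : T) := st u * u = 1 /\ u * st u = 1.
Definition proj (e : T) := st e = e /\ e * e = e.

Lemma nm_unitary u : unitary u -> nm u <= 1.
Proof. by case=> H _; apply: nm_le1_sq; rewrite H nm1. Qed.
Lemma unitary_st u : unitary u -> unitary (st u).
Proof. by case=> H1 H2; split; rewrite stK. Qed.
Lemma nm_proj e : proj e -> nm e <= 1.
Proof.
case=> H1 H2; have := cstar e; rewrite H1 H2 expr2 => E.
have [->|n0] := eqVneq (nm e) 0; first by [].
have : nm e * 1 = nm e * nm e by rewrite mulr1 -E.
by move/(mulfI n0) => <-.
Qed.
Lemma proj_small e : proj e -> nm e < 1 -> e = 0.
Proof.
case=> H1 H2 H; apply: nm_eq0; have := cstar e; rewrite H1 H2 expr2 => E.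
have [//|n0] := eqVneq (nm e) 0.
have : nm e * 1 = nm e * nm e by rewrite mulr1 -E.
by move/(mulfI n0) => E1; move: H; rewrite -E1 ltxx.
Qed.

Lemma nmMc x y : nm x <= 1 -> nm (x * y) <= nm y.
Proof.
move=> H; apply: le_trans (nmM _ _) _.
by rewrite -[X in _ <= X]mul1r ler_wpM2r // nm_ge0.
Qed.
Lemma nmMcr x y : nm y <= 1 -> nm (x * y) <= nm x.
Proof.
move=> H; apply: le_trans (nmM _ _) _.
by rewrite -[X in _ <= X]mulr1 ler_wpM2l // nm_ge0.
Qed.
Lemma nmB3 x y z : nm (x - z) <= nm (x - y) + nm (y - z).
Proof. have -> : x - z = (x - y) + (y - z) by rewrite addrA subrK. exact: nmD. Qed.

Lemma nm_small x : (forall e : R, 0 < e -> nm x <= e) -> x = 0.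
Proof.
move=> H; apply: nm_eq0; apply/eqP; rewrite eq_le nm_ge0 andbT.
by apply/ler_addgt0Pr => e ep; rewrite add0r; apply: H.
Qed.
Lemma zero_by x (K : R) : 0 <= K -> (forall e : R, 0 < e -> nm x <= K * e) -> x = 0.
Proof.
move=> K0 H; apply: nm_small => e e0.
have K1 : 0 < K + 1 by lra.
have := H (e / (K + 1)) (divr_gt0 e0 K1).
move=> h; apply: le_trans h _.
rewrite mulrA ler_pdivrMr //; nra.
Qed.

Lemma nmM_le x y (a b : R) : nm x <= a -> nm y <= b -> nm (x * y) <= a * b.
Proof.
move=> h1 h2; apply: le_trans (nmM _ _) _; apply: ler_pM => //; exact: nm_ge0.
Qed.
End Basic.
Section Coef.
Variable R : realType.
Fixpoint cc (k : nat) : R :=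
  if k is k'.+1 then cc k' * (2 * k'%:R + 1) / (2 * k'%:R + 2) else 1.

Lemma cc_ge0 k : 0 <= cc k.
Proof.
elim: k => [|k IH] /=; first by [].
by rewrite divr_ge0 ?mulr_ge0 ?addr_ge0 ?mulr_ge0.
Qed.
Lemma cc_le1 k : cc k <= 1.
Proof.
elim: k => [|k IH] /=; first by [].
have h0 : 0 <= k%:R :> R by [].
rewrite ler_pdivrMr; last by lra.
have := cc_ge0 k => c0.
nra.
Qed.
Lemma ccS k : 2 * k.+1%:R * cc k.+1 = (2 * k%:R + 1) * cc k.
Proof.
rewrite /= -natr1. have h0 : 0 <= k%:R :> R by [].
have hz : 2 * k%:R + 2 != 0 :> R by rewrite lt0r_neq0 //; lra.
by field.
Qed.

Definition DD k := \sum_(0 <= j < k.+1) cc j * cc (k - j).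
Definition WW k := \sum_(0 <= j < k.+1) j%:R * cc j * cc (k - j).

Lemma WW_sym k : WW k *+ 2 = k%:R * DD k.
Proof.
rewrite /WW /DD mulr2n.
rewrite [X in _ + X = _]big_nat_rev /= -big_split /= mulr_sumr.
apply: eq_big_nat => j /andP[_ hj].
rewrite add0n subSS subKn; last by rewrite -ltnS.
have hjk : (j <= k)%N by rewrite -ltnS.
rewrite (natrB _ hjk); ring.
Qed.

Lemma DD_S k : DD k.+1 = DD k.
Proof.
have E1 := WW_sym k.+1.
have E2 : WW k.+1 *+ 2 = WW k *+ 2 + DD k.
  rewrite /WW big_nat_recl // mul0r mul0r add0r.
  rewrite -!sumrMnl /DD -big_split /=.
  apply: eq_big_nat => j /andP[_ hj].
  rewrite subSS.
  have := ccS j => H.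
  have -> : (j.+1%:R * cc j.+1 * cc (k - j)) *+ 2 = (2 * j.+1%:R * cc j.+1) * cc (k - j).
    by rewrite -mulr_natl; ring.
  rewrite H -mulr_natl; ring.
rewrite (WW_sym k) in E2; rewrite E2 in E1.
have hk : k.+1%:R != 0 :> R by rewrite pnatr_eq0.
apply: (mulfI hk); rewrite -E1 -natr1; ring.
Qed.

Lemma DD1 k : DD k = 1.
Proof.
elim: k => [|k IH]; first by rewrite /DD big_nat1 /= mulr1.
by rewrite DD_S.
Qed.
End Coef.

Section Geom.
Variable R : realType.
Lemma geom_tail (d : R) m n : 0 <= d -> 2 * d <= 1 ->
  \sum_(i < n) (if (m <= i)%N then d ^+ i else 0) <= 2 * d ^+ m.
Proof.
move=> d0 d1.
suff H : \sum_(i < n) (if (m <= i)%N then d ^+ i else 0) + 2 * d ^+ (maxn m n) <= 2 * d ^+ m.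
  apply: le_trans H; rewrite lerDl; apply: mulr_ge0 => //; exact: exprn_ge0.
elim: n => [|n IH]; first by rewrite big_ord0 add0r maxn0.
rewrite big_ord_recr /=.
case: (leqP m n) => hmn.
  rewrite (maxn_idPr (leqW hmn)) (maxn_idPr hmn) in IH *.
  apply: le_trans IH; rewrite -addrA lerD2l exprSr.
  have := exprn_ge0 n d0; nra.
rewrite (maxn_idPl hmn) (maxn_idPl (ltnW hmn)) in IH * ; rewrite addr0.
exact: IH.
Qed.

Lemma small_pow (d : R) (e : R) : 0 <= d -> 2 * d <= 1 -> 0 < e ->
  exists N, forall n, (N <= n)%N -> d ^+ n < e.
Proof.
move=> d0 d1 e0.
have [N HN] : exists N : nat, 1 / e < N%:R.
  exists (Num.bound (1/e)); apply: archi_boundP; rewrite divr_ge0 // ltW //.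
exists N => n hn.
have h1 : d ^+ n <= (1/2) ^+ n.
  apply: lerXn2r; rewrite ?nnegrE //; first by rewrite divr_ge0.
  by rewrite ler_pdivlMr // mulrC.
have h2 : forall k, k%:R <= (2 : R) ^+ k.
  elim=> [|k IH]; first by rewrite expr0 ler01.
  rewrite exprS -natr1; have : 1 <= (2:R) ^+ k by apply: exprn_ege1; lra.
  lra.
have h3 : (1/2) ^+ n = ((2:R) ^+ n)^-1 by rewrite div1r exprVn.
have hN : (N%:R : R) <= n%:R by rewrite ler_nat.
have p2 : 0 < (2:R) ^+ n by rewrite exprn_gt0.
apply: le_lt_trans h1 _; rewrite h3.
rewrite -(ltr_pM2r p2) mulVf ?gt_eqF //.
have := h2 n => h4.
have : 1 < e * N%:R by rewrite -ltr_pdivrMl // mulrC.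
move=> h5; have : e * N%:R <= e * 2 ^+ n by rewrite ler_pM2l //; lra.
lra.
Qed.
Lemma small_pow2 (d : R) (e K : R) : 0 <= d -> 2 * d <= 1 -> 0 < e -> 0 < K ->
  exists N, forall n, (N <= n)%N -> K * d ^+ n < e.
Proof.
move=> d0 d1 e0 K0; have [N HN] := small_pow d0 d1 (divr_gt0 e0 K0).
by exists N => n /HN; rewrite ltr_pdivlMr // mulrC.
Qed.
End Geom.

Section Ev.
Variables (R : realType) (A : cstar_alg R) (t : CT A).
Local Notation T := (CT A).
Local Notation nm := (@ca_norm R A).

Definition ev (P : {poly R}) : T := \sum_(i < size P) P`_i *: t ^+ i.

Lemma ev_ge (P : {poly R}) n : (size P <= n)%N -> ev P = \sum_(i < n) P`_i *: t ^+ i.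
Proof.
move=> h; rewrite /ev (big_ord_widen n (fun i => P`_i *: t ^+ i) h) big_mkcond.
apply: eq_bigr => i _; case: ifP => // /negbT; rewrite -leqNgt => h'.
by rewrite nth_default // scale0r.
Qed.

Lemma ev0 : ev 0 = 0.
Proof. by rewrite /ev size_poly0 big_ord0. Qed.

Lemma ev_add P Q : ev (P + Q) = ev P + ev Q.
Proof.
set n := (size P + size Q)%N.
have h1 : (size (P + Q)%R <= n)%N.
  apply: leq_trans (size_add _ _) _; rewrite geq_max leq_addr leq_addl //.
rewrite (ev_ge h1) (ev_ge (P:=P) (n:=n)) ?leq_addr // (ev_ge (P:=Q) (n:=n)) ?leq_addl //.
by rewrite -big_split /=; apply: eq_bigr => i _; rewrite coefD scalerDl.
Qed.

Lemma ev_Cmul c Q : ev (c%:P * Q) = c *: ev Q.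
Proof.
set n := (size (c%:P * Q)%R + size Q)%N.
rewrite (ev_ge (P:=_) (n:=n)) ?leq_addr // (ev_ge (P:=Q) (n:=n)) ?leq_addl // scaler_sumr.
by apply: eq_bigr => i _; rewrite coefCM scalerA.
Qed.

Lemma ev_opp Q : ev (- Q) = - ev Q.
Proof. by rewrite -mulN1r -polyCN ev_Cmul scaleN1r. Qed.

Lemma ev_sub P Q : ev (P - Q) = ev P - ev Q.
Proof. by rewrite ev_add ev_opp. Qed.

Lemma ev_C c : ev c%:P = c *: (1 : T).
Proof.
rewrite (ev_ge (P:=_) (n:=1)) ?size_polyC ?leq_b1 // big_ord1 coefC /= expr0 //.
Qed.

Lemma ev1 : ev 1 = 1.
Proof. by rewrite -polyC1 ev_C scale1r. Qed.

Lemma ev_MX Q : ev (Q * 'X) = ev Q * t.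
Proof.
have h : (size (Q * 'X)%R <= (size Q).+1)%N.
  by apply: leq_trans (size_polyMleq _ _) _; rewrite size_polyX addn2.
rewrite (ev_ge h) big_ord_recl coefMX /= scale0r add0r /ev mulr_suml.
by apply: eq_bigr => i _; rewrite coefMX /= rsc_mull exprSr.
Qed.

Lemma ev_X : ev 'X = t.
Proof. by rewrite -['X]mul1r ev_MX ev1 mul1r. Qed.

Lemma ev_comm Q : ev Q * t = t * ev Q.
Proof.
rewrite /ev mulr_suml mulr_sumr; apply: eq_bigr => i _.
by rewrite rsc_mull rsc_mulr -exprSr exprS.
Qed.

Lemma ev_mul P Q : ev (P * Q) = ev P * ev Q.
Proof.
elim/poly_ind: P Q => [|P c IH] Q; first by rewrite mul0r ev0 mul0r.
have -> : (P * 'X + c%:P) * Q = (P * Q) * 'X + c%:P * Q.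
  by rewrite mulrDl mulrAC.
rewrite ev_add ev_MX IH ev_Cmul ev_add ev_MX ev_C mulrDl rsc_mull mul1r.
by rewrite -!mulrA ev_comm.
Qed.

Lemma ev_commute P (y : T) : t * y = y * t -> ev P * y = y * ev P.
Proof.
move=> H; rewrite /ev mulr_suml mulr_sumr; apply: eq_bigr => i _.
rewrite rsc_mull rsc_mulr; congr (_ *: _).
move: (nat_of_ord i) => k.
elim: k => [|k IH]; first by rewrite expr0 mul1r mulr1.
by rewrite exprS -mulrA IH mulrA H -mulrA.
Qed.

Lemma ev_st P : st t = t -> st (ev P) = ev P.
Proof.
move=> H; rewrite /ev st_sum; apply: eq_bigr => i _.
by rewrite stZ stX H.
Qed.

Lemma nm_sum (n : nat) (F : 'I_n -> T) : nm (\sum_(i < n) F i) <= \sum_(i < n) nm (F i).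
Proof.
elim/big_rec2: _ => [|i y1 y2 _ H]; first by rewrite nm0.
apply: le_trans (nmD _ _) _; exact: lerD.
Qed.

Variable d : R.
Hypothesis d0 : 0 <= d.
Hypothesis d1 : 2 * d <= 1.
Hypothesis td : nm t <= d.

Lemma nm_pow i : nm (t ^+ i) <= d ^+ i.
Proof.
elim: i => [|i IH]; first by rewrite !expr0 nm1.
rewrite !exprS; apply: le_trans (nmM _ _) _; apply: ler_pM => //; exact: nm_ge0.
Qed.

Lemma ev_tail (P : {poly R}) m (K : R) : (forall i, (i < m)%N -> P`_i = 0) ->
  (forall i, `|P`_i| <= K) -> nm (ev P) <= 2 * K * d ^+ m.
Proof.
move=> H0 HK.
have K0 : 0 <= K by apply: le_trans (HK 0%N).
apply: le_trans (nm_sum _) _.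
apply: (@le_trans _ _ (K * \sum_(i < size P) (if (m <= i)%N then d ^+ i else 0))).
  rewrite mulr_sumr; apply: ler_sum => i _; rewrite nmZ.
  case: leqP => h; last by rewrite H0 // normr0 mul0r mulr0.
  apply: ler_pM => //; [exact: nm_ge0 | exact: nm_pow].
rewrite -mulrA mulrCA; apply: ler_wpM2l => //; exact: geom_tail.
Qed.

Definition Pn n : {poly R} := \poly_(i < n) cc R i.
Definition Sn n := ev (Pn n).

Lemma coef_Pn n i : (Pn n)`_i = if (i < n)%N then cc R i else 0.
Proof. exact: coef_poly. Qed.

Lemma abs_Pn n i : `|(Pn n)`_i| <= 1.
Proof.
rewrite coef_Pn; case: ifP => _; last by rewrite normr0.
by rewrite ger0_norm ?cc_le1 ?cc_ge0.
Qed.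

Lemma Sn_cauchy m n : (m <= n)%N -> nm (Sn n - Sn m) <= 2 * d ^+ m.
Proof.
move=> hmn; rewrite /Sn -ev_sub.
apply: le_trans (ev_tail (P := Pn n - Pn m) (m := m) (K := 1) _ _) _; last by rewrite mulr1.
  move=> i him; rewrite coefB !coef_Pn him (leq_trans him hmn) subrr //.
move=> i; rewrite coefB !coef_Pn; case: (ltnP i m) => him.
  by rewrite (leq_trans him hmn) subrr normr0.
by rewrite subr0; case: ifP => _; rewrite ?normr0 // ger0_norm ?cc_le1 ?cc_ge0.
Qed.

Lemma Sn_one n : (0 < n)%N -> nm (Sn n - 1) <= 2 * d.
Proof.
move=> hn; rewrite /Sn -ev1 -ev_sub.
apply: le_trans (ev_tail (P := Pn n - 1) (m := 1) (K := 1) _ _) _; first last.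
  by rewrite mulr1 expr1.
  move=> [|i]; rewrite coefB coef1 /=; last by rewrite subr0 abs_Pn.
  by rewrite coef_Pn hn /= subrr normr0.
by move=> [|i] // _; rewrite coefB coef_Pn hn coef1 /= subrr.
Qed.

Lemma nm_Sn n : (0 < n)%N -> nm (Sn n) <= 2.
Proof.
move=> hn; have h1 := Sn_one hn; have h2 : nm (1 : T) <= 1 by exact: nm1.
have := nmD (Sn n - 1) 1; rewrite subrK => h3.
have h4 : nm (Sn n) <= 2 * d + 1 by apply: le_trans h3 _; exact: lerD.
apply: le_trans h4 _; have h5 := d1; lra.
Qed.

Lemma coef_PP n i : (i < n)%N -> (Pn n * Pn n)`_i = 1.
Proof.
move=> hi; rewrite coefM -(DD1 R i) /DD big_mkord; apply: eq_bigr => j _.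
rewrite !coef_Pn (leq_ltn_trans _ hi) ?(leq_ltn_trans _ hi) // ?leq_subr //.
by rewrite -ltnS.
Qed.

Lemma abs_PP n i : `|(Pn n * Pn n)`_i| <= 1.
Proof.
rewrite coefM -(DD1 R i) /DD big_mkord.
have H : forall j : 'I_i.+1, 0 <= (Pn n)`_j * (Pn n)`_(i - j) <= cc R j * cc R (i - j).
  move=> j; rewrite !coef_Pn.
  case: ifP => _; case: ifP => _; rewrite ?mul0r ?mulr0 ?lexx ?mulr_ge0 ?cc_ge0 //.
have S0 : 0 <= \sum_(j < i.+1) (Pn n)`_j * (Pn n)`_(i - j).
  by apply: sumr_ge0 => j _; case/andP: (H j).
rewrite ger0_norm //; apply: ler_sum => j _; by case/andP: (H j).
Qed.

Lemma Sn_inv n : (0 < n)%N -> nm (Sn n * Sn n * (1 - t) - 1) <= 6 * d ^+ n.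
Proof.
move=> hn.
have -> : Sn n * Sn n * (1 - t) - 1 = ev (Pn n * Pn n * (1 - 'X) - 1).
  by rewrite ev_sub ev_mul ev_mul ev_sub ev1 ev_X.
have -> : 6 * d ^+ n = 2 * 3 * d ^+ n by ring.
apply: ev_tail.
  move=> i hi; rewrite mulrBr mulr1 !coefB coefMX coef1 coef_PP //.
  case: i hi => [|i] hi /=; first by rewrite subr0 subrr.
  by rewrite coef_PP ?subrr ?subr0 // (ltn_trans _ hi).
move=> i; rewrite mulrBr mulr1 !coefB coefMX coef1.
apply: le_trans (ler_normB _ _) _; apply: le_trans (lerD (ler_normB _ _) (lexx _)) _.
have := abs_PP n i; have : `|(if i == 0%N then 0 else (Pn n * Pn n)`_i.-1)| <= 1.
  by case: (i == 0%N); rewrite ?normr0 ?abs_PP.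
have : `|((i == 0%N)%:R : R)| <= 1 by case: (i == 0%N); rewrite ?normr0 ?normr1.
lra.
Qed.
Lemma exists_lim : exists s, forall e : R, 0 < e -> exists N, forall n, (N <= n)%N -> nm (Sn n - s) < e.
Proof.
have dd0 := d0; have dd1 := d1.
case: (@ca_complete R A Sn).
  move=> e e0; have [N HN] := small_pow2 dd0 dd1 e0 (ltr0Sn _ 1).
  exists N => m n hm hn; rewrite -/(nm _).
  have -> : ca_add (Sn m) (ca_opp (Sn n)) = Sn m - Sn n by [].
  case: (leqP m n) => h.
    by rewrite nmBC; apply: le_lt_trans (Sn_cauchy h) _; apply: HN.
  by apply: le_lt_trans (Sn_cauchy (ltnW h)) _; apply: HN.
move=> s Hs; exists s => e e0; have [N HN] := Hs e e0; exists N => n hn.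
exact: HN.
Qed.

Lemma sqrt_props : exists s : T, [/\ s * s * (1 - t) = 1, (st t = t -> st s = s),
  (forall y, t * y = y * t -> s * y = y * s) & nm (s - 1) <= 2 * d].
Proof.
have dd0 := d0; have dd1 := d1; have tdd := td.
have [s Hs] := exists_lim.
have S4 : nm (s - 1) <= 2 * d.
  apply/ler_addgt0Pr => e e0; have [N HN] := Hs e e0.
  have h1 := HN (maxn N 1) (leq_maxl _ _).
  have h2 := Sn_one (leq_trans (isT : (0 < 1)%N) (leq_maxr N 1)).
  have h3 := nmB3 s (Sn (maxn N 1)) 1; rewrite (nmBC s (Sn _)) in h3; lra.
have ns : nm s <= 2.
  have h2 : nm (1 : T) <= 1 by exact: nm1.
  have := nmD (s - 1) 1; rewrite subrK => h3; lra.
exists s; split => //.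
- apply/eqP; rewrite -subr_eq0; apply/eqP; apply: (@zero_by _ _ _ 9) => // e e0.
  have [N1 HN1] := Hs e e0.
  have six : (0:R) < 6 by lra.
  have [N2 HN2] := small_pow2 dd0 dd1 e0 six.
  set n := maxn (maxn N1 N2) 1.
  have hn1 : (N1 <= n)%N by rewrite /n !leq_max leqnn.
  have hn2 : (N2 <= n)%N by rewrite /n !leq_max leqnn orbT.
  have hn3 : (0 < n)%N by rewrite /n leq_max orbT.
  have E : s * s * (1 - t) - 1 = (s * (s - Sn n) + (s - Sn n) * Sn n) * (1 - t) + (Sn n * Sn n * (1 - t) - 1).
    have E0 : s * (s - Sn n) + (s - Sn n) * Sn n = s * s - Sn n * Sn n.
      by rewrite mulrBr mulrBl addrA subrK.
    by rewrite E0 mulrBl addrA subrK.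
  rewrite E; apply: le_trans (nmD _ _) _.
  have a1 : nm (s - Sn n) <= e by rewrite nmBC; apply: ltW; apply: HN1.
  have a2 : nm (1 - t) <= 2.
    have h2 : nm (1 : T) <= 1 by exact: nm1.
    apply: le_trans (nmD _ _) _; rewrite nmN; lra.
  have a3 := nm_Sn hn3.
  have b1 : nm (s * (s - Sn n) + (s - Sn n) * Sn n) <= 2 * e + e * 2.
    apply: le_trans (nmD _ _) _; apply: lerD; exact: nmM_le.
  have b2 := nmM_le b1 a2.
  have b3 := Sn_inv hn3.
  have b4 := HN2 n hn2.
  lra.
- move=> ht; apply/eqP; rewrite -subr_eq0; apply/eqP; apply: (@zero_by _ _ _ 2) => // e e0.
  have [N HN] := Hs e e0.
  have E : st s - s = st (s - Sn N) + (Sn N - s) by rewrite stB /Sn ev_st // addrA subrK.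
  rewrite E; apply: le_trans (nmD _ _) _; rewrite nm_st (nmBC s).
  have h := HN N (leqnn N); lra.
- move=> y hy; apply/eqP; rewrite -subr_eq0; apply/eqP.
  apply: (@zero_by _ _ _ (2 * nm y)); first by rewrite mulr_ge0 ?nm_ge0.
  move=> e e0; have [N HN] := Hs e e0.
  have HS : Sn N * y = y * Sn N by rewrite /Sn ev_commute.
  have E : s * y - y * s = (s - Sn N) * y + y * (Sn N - s).
    by rewrite mulrBl mulrBr HS addrA subrK.
  rewrite E; apply: le_trans (nmD _ _) _.
  have a1 : nm (s - Sn N) <= e by rewrite nmBC; apply: ltW; apply: HN.
  have a2 : nm (Sn N - s) <= e by apply: ltW; apply: HN.
  have := nmM_le a1 (lexx (nm y)); have := nmM_le (lexx (nm y)) a2.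
  move=> *; nra.
Qed.
End Ev.

Section Polar.
Variables (R : realType) (A : cstar_alg R).
Local Notation T := (CT A).
Local Notation nm := (@ca_norm R A).

Lemma polar (p q z : T) (dl : R) : proj p -> proj q -> q * z = z -> z * p = z ->
  nm z <= 1 -> 0 <= dl -> 10 * dl <= 1 ->
  nm (st z * z - p) <= dl -> nm (z * st z - q) <= dl ->
  exists w, [/\ st w * w = p, w * st w = q & nm (w - z) <= 2 * dl].
Proof.
move=> [Hsp Hpp] [Hsq Hqq] Hqz Hzp nz dl0 dl1 H1 H2.
set h := st z * z.
have zs1 : p * st z = st z by rewrite -[p in p * _]Hsp -stM Hzp.
have zs2 : st z * q = st z by rewrite -[q in _ * q]Hsq -stM Hqz.
have ph : p * h = h by rewrite /h mulrA zs1.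
have hp : h * p = h by rewrite /h -mulrA Hzp.
set t := p - h.
have pt : p * t = t by rewrite /t mulrBr Hpp ph.
have tp : t * p = t by rewrite /t mulrBl Hpp hp.
have stt : st t = t by rewrite /t stB /h stM stK Hsp.
have ntd : nm t <= dl by rewrite /t nmBC.
have dl2 : 2 * dl <= 1 by lra.
have [s [Hinv Hst Hcomm Hs1]] := sqrt_props dl0 dl2 ntd.
have sp : s * p = p * s by apply: Hcomm; rewrite pt tp.
have sst := Hst stt.
have hst : h = p * (1 - t) by rewrite mulrBr mulr1 pt /t opprB addrC subrK.
have s1t : s * (1 - t) = (1 - t) * s.
  by rewrite mulrBr mulrBl mulr1 mul1r (Hcomm t).
have W1 : st (z * s) * (z * s) = p.
  transitivity (s * h * s); first by rewrite stM sst /h !mulrA.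
  by rewrite hst mulrA sp -mulrA -mulrA -s1t (mulrA s s) Hinv mulr1.
set w := z * s.
set P := w * st w.
have wp : w * p = w by rewrite /w -mulrA sp mulrA Hzp.
have stP : st P = P by rewrite /P stM stK.
have PP : P * P = P by rewrite /P mulrA -(mulrA w) W1 wp.
have qP : q * P = P by rewrite /P mulrA /w mulrA Hqz.
have swq : st w * st q = st w by rewrite -stM /w mulrA Hqz.
rewrite Hsq in swq.
have Pq : P * q = P by rewrite /P -mulrA swq.
have pe : proj (q - P).
  split; first by rewrite stB Hsq stP.
  by rewrite mulrBl !mulrBr Hqq qP Pq PP subrr subr0.
have ns : nm s <= 1 + 2 * dl.
  have h2 : nm (1 : T) <= 1 by exact: nm1.
  have := nmD (s - 1) 1; rewrite subrK => h3; lra.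
have E1 : 1 - s * s = - (s * s * t).
  apply/eqP; rewrite -subr_eq0 opprK -[X in X - _ + _]Hinv mulrBr mulr1; apply/eqP.
  by rewrite (addrAC (s * s)) subrr add0r addNr.
have n1 : nm (1 - s * s) <= (1 + 2 * dl) * (1 + 2 * dl) * dl.
  rewrite E1 nmN; apply: nmM_le => //; exact: nmM_le.
have E2 : z * st z - P = z * (1 - s * s) * st z.
  by rewrite /P /w stM sst mulrBr mulr1 mulrBl !mulrA.
have nzs : nm (st z) <= 1 by rewrite nm_st.
have n2 : nm (z * st z - P) <= (1 + 2 * dl) * (1 + 2 * dl) * dl.
  rewrite E2; apply: le_trans (nmMcr _ nzs) _; apply: le_trans (nmMc _ nz) _; exact: n1.
have n3 : nm (q - P) < 1.
  have := nmB3 q (z * st z) P; rewrite (nmBC q) => h3.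
  apply: le_lt_trans h3 _.
  have k1 : (1 + 2 * dl) * (1 + 2 * dl) <= 2 by nra.
  have k2 : (1 + 2 * dl) * (1 + 2 * dl) * dl <= 2 * dl by rewrite ler_wpM2r.
  have H2p : nm (q - z * st z) <= dl by rewrite nmBC.
  lra.
have qPe : q = P by apply/eqP; rewrite -subr_eq0; apply/eqP; exact: proj_small.
exists w; split => //.
have E3 : w - z = z * (s - 1) by rewrite /w mulrBr mulr1.
rewrite E3; apply: le_trans (nmMc _ nz) _; exact: Hs1.
Qed.
End Polar.

Section Null.
Variable R : realType.
Definition null (f : nat -> R) := forall e : R, 0 < e -> exists N, forall j, (N <= j)%N -> f j < e.

Lemma null_add f g : null f -> null g -> null (fun j => f j + g j).
Proof.
move=> hf hg e e0; have e2 : 0 < e / 2 by rewrite divr_gt0.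
have [N1 H1] := hf _ e2; have [N2 H2] := hg _ e2.
exists (maxn N1 N2) => j hj.
have := H1 j (leq_trans (leq_maxl _ _) hj); have := H2 j (leq_trans (leq_maxr _ _) hj).
move=> a b; lra.
Qed.

Lemma null_mulc (K : R) f : 0 <= K -> null f -> null (fun j => K * f j).
Proof.
move=> K0 hf e e0; have K1 : 0 < K + 1 by lra.
have [N H] := hf _ (divr_gt0 e0 K1); exists N => j hj.
have h := H j hj; set c := e / (K + 1) in h.
have ec : e = (K + 1) * c by rewrite /c mulrC divfK ?gt_eqF.
have c0 : 0 < c by rewrite /c divr_gt0.
have : K * f j <= K * c by rewrite ler_wpM2l // ltW.
rewrite ec; nra.
Qed.

Lemma null_le f g : (exists N0, forall j, (N0 <= j)%N -> f j <= g j) -> null g -> null f.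
Proof.
move=> [N0 H0] hg e e0; have [N H] := hg _ e0; exists (maxn N0 N) => j hj.
apply: le_lt_trans (H0 j (leq_trans (leq_maxl _ _) hj)) _.
exact: H j (leq_trans (leq_maxr _ _) hj).
Qed.

Lemma inv_small (e : R) : 0 < e -> exists K, forall k, (K <= k)%N -> (k%:R + 20)^-1 < e.
Proof.
move=> e0; exists (Num.bound (e^-1)) => k hk.
have h1 : e^-1 < (Num.bound e^-1)%:R by apply: archi_boundP; rewrite invr_ge0 ltW.
have h2 : ((Num.bound e^-1)%:R : R) <= k%:R by rewrite ler_nat.
have h3 : e^-1 < k%:R + 20 by have : (0 : R) <= k%:R by []; lra.
have p1 : (0:R) < k%:R + 20 by have : (0 : R) <= k%:R by []; lra.
have p2 : 0 < e^-1 by rewrite invr_gt0.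
by rewrite -[X in _ < X]invrK ltf_pV2 ?posrE.
Qed.

Lemma null_inv : null (fun k => (k%:R + 20)^-1).
Proof. by move=> e e0; have [K H] := inv_small e0; exists K. Qed.

Lemma diag (f : nat -> nat -> R) :
  (forall k e, 0 < e -> exists N, forall j, (N <= j)%N -> f k j < e) ->
  exists (n : nat -> nat) (g : nat -> bool),
    (forall j, g j -> f (n j) j < ((n j)%:R + 20)^-1) /\
    (forall K, exists J, forall j, (J <= j)%N -> g j /\ (K <= n j)%N).
Proof.
move=> H.
have pos : forall k : nat, (0:R) < (k%:R + 20)^-1.
  by move=> k; rewrite invr_gt0; have : (0 : R) <= k%:R by []; lra.
have [N HN] := choice (fun k => H k _ (pos k)).
exists (fun j => (\max_(k < j.+1 | (N k <= j)%N) (k : nat))%N), (fun j => (N 0%N <= j)%N).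
split.
  move=> j g0; apply: HN.
  rewrite (bigop.bigmax_eq_arg (ord0 : 'I_j.+1)) //; case: arg_maxnP => //= i Pi _.
move=> K; exists (maxn K (maxn (N K) (N 0%N))) => j hj.
rewrite !geq_max in hj; case/and3P: hj => h1 h2 h3; split => //.
have hK : (K < j.+1)%N by rewrite ltnS.
exact: (bigop.leq_bigmax_cond (Ordinal hK)).
Qed.
End Null.

Lemma zid (V : zmodType) (a b c d : V) : a - c = (a - b - (c - d)) + (b - d).
Proof. by rewrite opprB addrACA subrK addrAC subrr add0r. Qed.

Section Helpers.
Variables (R : realType) (A : cstar_alg R).
Local Notation T := (CT A).
Local Notation nm := (@ca_norm R A).
Implicit Types x y a b u v : T.

Lemma L_conj u a b : unitary u -> nm (u * a * st u - b) <= nm (st u * b * u - a).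
Proof.
move=> [H1 H2].
have E : u * a * st u - b = u * (a - st u * b * u) * st u.
  have {H2}H2 : u * st u = 1 by [].
  by rewrite mulrBr mulrBl !mulrA H2 mul1r -(mulrA b u) H2 mulr1.
rewrite E nmBC; apply: le_trans (nmMcr _ _) _; first by rewrite nm_st nm_unitary.
by apply: nmMc; apply: nm_unitary.
Qed.

Lemma L_commst x a : unitary x -> nm (st x * a - a * st x) <= nm (x * a - a * x).
Proof.
move=> [H1 H2]; have {H1}H1 : st x * x = 1 by []; have {H2}H2 : x * st x = 1 by [].
have E : st x * a - a * st x = st x * (a * x - x * a) * st x.
  by rewrite mulrBr mulrBl !mulrA H1 mul1r -!mulrA H2 mulr1.
rewrite E nmBC; apply: le_trans (nmMcr _ _) _; first by rewrite nm_st nm_unitary.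
by apply: nmMc; rewrite nm_st nm_unitary.
Qed.

Lemma L_comm_mul y1 y2 a : nm (y1 * y2 * a - a * (y1 * y2)) <=
  nm y1 * nm (y2 * a - a * y2) + nm (y1 * a - a * y1) * nm y2.
Proof.
have E : y1 * y2 * a - a * (y1 * y2) = y1 * (y2 * a - a * y2) + (y1 * a - a * y1) * y2.
  rewrite mulrBr mulrBl !mulrA addrA subrK //.
rewrite E; apply: le_trans (nmD _ _) _; apply: lerD; exact: nmM.
Qed.

Lemma L_comm_diff w y a : nm (w * a - a * w) <= 2 * nm a * nm (w - y) + nm (y * a - a * y).
Proof.
have E : w * a - a * w = ((w - y) * a - a * (w - y)) + (y * a - a * y).
  by rewrite mulrBl mulrBr -zid.
rewrite E; apply: le_trans (nmD _ _) _; apply: lerD => //.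
apply: le_trans (nmD _ _) _; rewrite nmN.
have := nmM (w - y) a; have := nmM a (w - y); have := nm_ge0 a; have := nm_ge0 (w - y).
move=> *; nra.
Qed.
Lemma L_X1 u v p q : unitary u -> unitary v ->
  nm (st (st v * u) * p * (st v * u) - q) <= nm (v * p - p * v) + nm (st u * p * u - q).
Proof.
move=> hu [V1 V2]; have {V2}V2 : v * st v = 1 by [].
have E : st (st v * u) * p * (st v * u) - st u * p * u = st u * ((v * p - p * v) * st v) * u.
  rewrite stM stK mulrBl !mulrBr !mulrBl !mulrA -(mulrA (st u * p)) V2 mulr1 //.
have n1 : nm (st (st v * u) * p * (st v * u) - st u * p * u) <= nm (v * p - p * v).
  rewrite E; apply: le_trans (nmMcr _ _) _; first exact: nm_unitary.
  apply: le_trans (nmMc _ _) _; first by rewrite nm_st nm_unitary.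
  by apply: nmMcr; rewrite nm_st nm_unitary.
have := nmB3 (st (st v * u) * p * (st v * u)) (st u * p * u) q; lra.
Qed.

Lemma L_X4 u v a b : unitary u -> unitary v ->
  nm (st v * u * a - a * (st v * u)) <= nm (st u * b * u - a) + nm (st v * b * v - a).
Proof.
move=> hu hv; have hu' := hu; have hv' := hv.
case: hu' => [U1 U2]; case: hv' => [V1 V2].
have {U1}U1 : st u * u = 1 by []; have {V1}V1 : st v * v = 1 by [].
have E : st v * u * a - a * (st v * u) = st v * (u * a * st u - v * a * st v) * u.
  rewrite mulrBr mulrBl !mulrA -(mulrA _ (st u) u) U1 mulr1 V1 mul1r //.
rewrite E; apply: le_trans (nmMcr _ _) _; first exact: nm_unitary.
apply: le_trans (nmMc _ _) _; first by rewrite nm_st nm_unitary.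
apply: le_trans (nmB3 _ b _) _; apply: lerD; first exact: L_conj.
by rewrite nmBC; apply: L_conj.
Qed.

Lemma L_Z x p q : unitary x -> proj p -> proj q ->
  [/\ nm (st (q * st x * p) * (q * st x * p) - p) <= nm (st x * p * x - q),
      nm ((q * st x * p) * st (q * st x * p) - q) <= nm (st x * p * x - q),
      nm ((q * st x * p) - st x * p) <= nm (st x * p * x - q),
      nm (q * st x * p) <= 1 &
      q * (q * st x * p) = q * st x * p /\ (q * st x * p) * p = q * st x * p].
Proof.
move=> hx hp hq; have hx' := hx; have hp' := hp; have hq' := hq.
case: hx' => [X1 X2]; case: hp' => [P1 P2]; case: hq' => [Q1 Q2].
have {X1}X1 : st x * x = 1 by []; have {X2}X2 : x * st x = 1 by [].
have {P1}P1 : st p = p by []; have {P2}P2 : p * p = p by [].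
have {Q1}Q1 : st q = q by []; have {Q2}Q2 : q * q = q by [].
set r := st x * p * x.
have nx : nm x <= 1 by exact: nm_unitary.
have nsx : nm (st x) <= 1 by rewrite nm_st.
have np : nm p <= 1 by exact: nm_proj.
have nq : nm q <= 1 by exact: nm_proj.
have nrq : nm (q - r) = nm (r - q) by rewrite nmBC.
have nsxp : nm (st x * p) <= 1 := le_trans (nmMc _ nsx) np.
have npx : nm (p * x) <= 1 := le_trans (nmMc _ np) nx.
have stz : st (q * st x * p) = p * x * q by rewrite !stM stK P1 Q1 mulrA.
split.
- have E : st (q * st x * p) * (q * st x * p) - p = (p * x) * (q - r) * (st x * p).
    rewrite stz mulrBr mulrBl /r !mulrA -(mulrA (p * x) q q) Q2.
    by rewrite -(mulrA p x (st x)) X2 mulr1 P2 -(mulrA p x (st x)) X2 mulr1 P2.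
  rewrite E -nrq; apply: le_trans (nmMcr _ nsxp) _; exact: nmMc _ npx.
- have E : (q * st x * p) * st (q * st x * p) - q = q * (r - q) * q.
    by rewrite stz mulrBr mulrBl /r !mulrA -(mulrA (q * st x) p p) P2 Q2 Q2.
  by rewrite E; apply: le_trans (nmMcr _ nq) _; apply: le_trans (nmMc _ nq) _.
- have E : (q * st x * p) - st x * p = (q - r) * (st x * p).
    by rewrite mulrBl /r !mulrA -(mulrA (st x * p) x (st x)) X2 mulr1 -(mulrA (st x) p p) P2.
  rewrite E -nrq; exact: nmMcr _ nsxp.
- by apply: le_trans (nmMcr _ np) _; apply: le_trans (nmMcr _ nsx) _.
- by split; rewrite ?mulrA ?Q2 // -mulrA P2.
Qed.
End Helpers.

Section Main.
Variables (R : realType) (A : cstar_alg R).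
Local Notation T := (CT A).
Local Notation nm := (@ca_norm R A).

Lemma inv20 (k : nat) : 0 <= (k%:R + 20 : R)^-1 <= 1/20.
Proof.
have h0 : (0:R) <= k%:R by [].
rewrite invr_ge0 (_ : 0 <= _) /=; last by lra.
rewrite div1r lef_pV2 ?posrE; lra.
Qed.

Lemma main_T (alpha g : T -> T) (u p : nat -> T) :
  (forall x y, alpha (x * y) = alpha x * alpha y) ->
  (forall x, alpha (st x) = st (alpha x)) ->
  (forall a, alpha (g a) = a) ->
  (forall n, unitary (u n)) ->
  (forall a e, 0 < e -> exists N, forall n, (N <= n)%N -> nm (st (u n) * a * u n - alpha a) < e) ->
  (forall j, proj (p j)) ->
  (forall a e, 0 < e -> exists N, forall j, (N <= j)%N -> nm (p j * a - a * p j) < e) ->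
  exists w : nat -> T, (forall j, st (w j) * w j = p j /\ w j * st (w j) = alpha (p j)) /\
    (forall a, null (fun j => nm (w j * a - a * w j))).
Proof.
move=> hM hS hg hu hconv hp hc.
set q := fun j => alpha (p j).
have hq : forall j, proj (q j).
  move=> j; case: (hp j) => P1 P2; split; first by rewrite /q -hS P1.
  by rewrite /q -hM P2.
have [n [gg [D1 D2]]] := diag (f := fun k j => nm (p j * u k - u k * p j))
   (fun k e e0 => hc (u k) e e0).
have hm : forall j, exists m, (j <= m)%N /\ nm (st (u m) * p j * u m - q j) < ((j%:R + 20)^-1).
  move=> j; have e0 : (0:R) < (j%:R + 20)^-1 by case/andP: (inv20 j) => _ _; rewrite invr_gt0; have : (0:R) <= j%:R by []; lra.
  have [N HN] := hconv (p j) _ e0; exists (maxn N j); split; first exact: leq_maxr.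
  exact: HN (leq_maxl _ _).
have [m Hm] := choice hm.
set v := fun j => if gg j then u (n j) else 1.
have hv : forall j, unitary (v j).
  move=> j; rewrite /v; case: (gg j) => //; split; by rewrite st1 mulr1.
set x := fun j => st (v j) * u (m j).
have hx : forall j, unitary (x j).
  move=> j; case: (hv j) => V1 V2; case: (hu (m j)) => U1 U2.
  have {V1}V1 : st (v j) * v j = 1 by []; have {V2}V2 : v j * st (v j) = 1 by [].
  have {U1}U1 : st (u (m j)) * u (m j) = 1 by []; have {U2}U2 : u (m j) * st (u (m j)) = 1 by [].
  rewrite /x; split; rewrite stM stK.
    by rewrite -mulrA (mulrA (v j)) V2 mul1r U1.
  by rewrite -mulrA (mulrA (u (m j))) U2 mul1r V1.
set dlt := fun j => nm (v j * p j - p j * v j) + (j%:R + 20)^-1.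
have X1 : forall j, nm (st (x j) * p j * x j - q j) <= dlt j.
  move=> j; rewrite /x; apply: le_trans (@L_X1 R A (u (m j)) (v j) (p j) (q j) (hu (m j)) (hv j)) _.
  by rewrite /dlt lerD2l; apply: ltW; case: (Hm j).
have X2 : forall j, 0 <= dlt j /\ 10 * dlt j <= 1.
  move=> j; have := inv20 j; case/andP => i1 i2.
  have : 0 <= nm (v j * p j - p j * v j) <= 1/20.
    rewrite nm_ge0 /= /v; case E: (gg j); last by rewrite mulr1 mul1r subrr nm0; lra.
    rewrite nmBC; apply: ltW; apply: lt_le_trans (D1 j E) _.
    by case/andP: (inv20 (n j)).
  case/andP => i3 i4; rewrite /dlt; split; lra.
have X3 : null dlt.
  apply: null_add; last exact: null_inv.
  move=> e e0; have [K HK] := inv_small e0; have [J HJ] := D2 K.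
  exists J => j hj; case: (HJ j hj) => gj kj.
  rewrite /v gj nmBC; apply: lt_trans (D1 j gj) _; exact: HK.
have X4 : forall a, null (fun j => nm (x j * a - a * x j)).
  move=> a; set b := g a.
  apply: null_le (null_add (f := fun j => nm (st (u (m j)) * b * u (m j) - alpha b))
                           (g := fun j => nm (st (v j) * b * v j - alpha b)) _ _).
    exists 0%N => j _; rewrite /b hg /x; exact: L_X4.
  - move=> e e0; have [N HN] := hconv b e e0; exists N => j hj; apply: HN.
    by apply: leq_trans hj _; case: (Hm j).
  - move=> e e0; have [N HN] := hconv b e e0; have [J HJ] := D2 N.
    exists J => j hj; case: (HJ j hj) => gj kj; rewrite /v gj; exact: HN.
set z := fun j => q j * st (x j) * p j.
have hw : forall j, exists w, [/\ st w * w = p j, w * st w = q j & nm (w - z j) <= 2 * dlt j].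
  move=> j; have [Z1 Z2 Z3 Z4 [Z5 Z6]] := L_Z (hx j) (hp j) (hq j).
  case: (X2 j) => d0 d1.
  apply: (polar (hp j) (hq j) Z5 Z6 Z4 d0 d1).
    exact: le_trans Z1 (X1 j).
  exact: le_trans Z2 (X1 j).
have [w Hw] := choice hw.
exists w; split; first by move=> j; case: (Hw j).
move=> a.
apply: null_le (null_add (null_mulc (K := 6 * nm a) _ X3) (null_add (hc a) (X4 a))).
  exists 0%N => j _.
  have [Z1 Z2 Z3 Z4 _] := L_Z (hx j) (hp j) (hq j).
  case: (Hw j) => _ _ W3.
  set y := st (x j) * p j.
  apply: le_trans (L_comm_diff (w j) y a) _.
  have e1 : nm (w j - y) <= 3 * dlt j.
    apply: le_trans (nmB3 _ (z j) _) _; have := le_trans Z3 (X1 j); rewrite /z; lra.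
  have e2 : nm (y * a - a * y) <= nm (p j * a - a * p j) + nm (x j * a - a * x j).
    apply: le_trans (L_comm_mul _ _ _) _.
    have n1 : nm (st (x j)) <= 1 by rewrite nm_st nm_unitary.
    have n2 : nm (p j) <= 1 by exact: nm_proj.
    have := L_commst a (hx j).
    have := nm_ge0 (p j * a - a * p j); have := nm_ge0 (st (x j) * a - a * st (x j)).
    have := nm_ge0 (st (x j)); have := nm_ge0 (p j).
    move=> *; nra.
  have := nm_ge0 a; have := nm_ge0 (w j - y); move=> *; nra.
by rewrite mulr_ge0 ?nm_ge0.
Qed.
End Main.

Unset Implicit Arguments.
Local Close Scope ring_scope.

Theorem lemma3p1 (R : realType) (A : cstar_alg R) (alpha : A -> A)
  (p : nat -> A) :
  separable A ->
  is_automorphism alpha ->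
  approximately_inner alpha ->
  (forall j, is_projection (p j)) ->
  central_seq p ->
  exists w : nat -> A,
    (forall j, is_partial_isometry (w j)) /\ central_seq w /\
    (forall j, ca_mul (ca_star (w j)) (w j) = p j /\
               ca_mul (w j) (ca_star (w j)) = alpha (p j)).
Proof.
move=> _ [_ [_ [hM [_ [hS [g _ Kg]]]]]] [u [hu hconv]] hp hc.
have [w [H1 H2]] := @main_T R A alpha g u p hM hS Kg hu hconv hp hc.
exists w; split; last split.
- move=> j; rewrite /is_partial_isometry.
  have -> : ca_mul (ca_star (w j)) (w j) = p j by case: (H1 j).
  exact: hp.
- move=> a e e0; exact: H2 a e e0.
- exact: H1.
Qed.
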